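(* Let $k,d$ be positive integers and let $0\le r\le k-1$ with $d\equiv r\pmod k$. There exists $n_0=n_0(d,k)$ such that for every $n\ge n_0$ and every $\mathcal{A}\subset 2^{[n]}$ with $\mathrm{VC}(\triangle\mathcal{A}^k)\le d$, we have $|\mathcal{A}|\le 2^r\binom{n-r}{\le\lfloor d/k\rfloor}$.
   Context: $[n]=\{1,\dots,n\}$. For $Y\subset[n]$, $Y$ is shattered by $\mathcal{F}\subset 2^{[n]}$ if $\{S\cap Y: S\in\mathcal{F}\}=2^Y$; $\mathrm{VC}(\mathcal{F})$ is the largest cardinality of a set shattered by $\mathcal{F}$. $\triangle\mathcal{A}^k=\{S_1\triangle\cdots\triangle S_k: S_i\in\mathcal{A}\ \forall i\in[k]\}$ (the $S_i$ need not be distinct), where $\triangle$ is symmetric difference. $\binom{m}{\le t}=\sum_{j=0}^{t}\binom{m}{j}$. *)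

(* Defs.v *)
From mathcomp Require Import all_boot.
Set Implicit Arguments. Unset Strict Implicit. Unset Printing Implicit Defensive.

Definition symd (T : finType) (A B : {set T}) : {set T} := (A :\: B) :|: (B :\: A).

Definition symd_big (T : finType) (k : nat) (S : {ffun 'I_k -> {set T}}) : {set T} :=
  \big[@symd T/set0]_(i < k) S i.

Definition symdk (T : finType) (A : {set {set T}}) (k : nat) : {set {set T}} :=
  [set symd_big S | S in [set S : {ffun 'I_k -> {set T}} | [forall i, S i \in A]]].

Definition shattered (T : finType) (F : {set {set T}}) (Y : {set T}) : bool :=
  [set S :&: Y | S in F] == powerset Y.

(* VC dimension: largest cardinality of a shattered set (0 if none) *)
Definition VC (T : finType) (F : {set {set T}}) : nat :=
  \max_(Y : {set T} | shattered F Y) #|Y|.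

Definition binom_le (m t : nat) : nat := \sum_(0 <= j < t.+1) 'C(m, j).

(* Main.v *)
Require Import Defs.
From mathcomp Require Import all_boot.
From mathcomp Require Import zify.
Set Implicit Arguments. Unset Strict Implicit. Unset Printing Implicit Defensive.

Lemma binom_le0 m : binom_le m 0 = 1.
Proof. by rewrite /binom_le big_nat1_id addn0 bin0. Qed.

Lemma binom_leS m t : binom_le m t.+1 = binom_le m t + 'C(m, t.+1).
Proof. by rewrite /binom_le big_nat_recr. Qed.

Lemma binom_le_Pascal m t : binom_le m.+1 t.+1 = binom_le m t.+1 + binom_le m t.
Proof.
rewrite /binom_le big_nat_recl // [in X in _ = X + _]big_nat_recl //.
rewrite !bin0 -addnA; congr (_ + _).
rewrite -big_split /=; apply: eq_bigr => j _; exact: binS.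
Qed.

Lemma binom_le_mono m m' t : m <= m' -> binom_le m t <= binom_le m' t.
Proof. by move=> le; apply: leq_sum => j _; apply: leq_bin2l. Qed.

Lemma binom_le_shift m a t : binom_le (m + a) t.+1 <= binom_le m t.+1 + a * binom_le (m + a) t.
Proof.
elim: a => [|a IH]; first by rewrite addn0 mul0n addn0.
rewrite addnS binom_le_Pascal mulSn.
have := binom_le_mono t (leqnSn (m + a)) => mono.
have : a * binom_le (m + a) t <= a * binom_le (m + a).+1 t by rewrite leq_mul2l mono orbT.
lia.
Qed.

Lemma exp_mono m n e : m <= n -> m ^ e <= n ^ e.
Proof. by case: e => [|e] le //; rewrite leq_exp2r. Qed.

Lemma ffact_le_exp n j : n ^_ j <= n ^ j.
Proof.
elim: j n => [|j IH] n; first by rewrite ffactn0 expn0.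
rewrite ffactnS expnS leq_mul2l; apply/orP; right.
by apply: leq_trans (IH n.-1) _; apply: exp_mono; apply: leq_pred.
Qed.

Lemma bin_le_exp n j : 'C(n, j) <= n ^ j.
Proof.
apply: leq_trans (ffact_le_exp n j); rewrite -bin_ffact.
by rewrite leq_pmulr // fact_gt0.
Qed.

Lemma binom_le_pred_bound n t : 0 < n -> binom_le n t <= t.+1 * n ^ t.
Proof.
move=> n0; rewrite /binom_le.
have : \sum_(0 <= j < t.+1) 'C(n, j) <= \sum_(0 <= j < t.+1) n ^ t.
  rewrite big_nat_cond [X in _ <= X]big_nat_cond; apply: leq_sum => j /andP [/andP [_ jt] _].
  by apply: leq_trans (bin_le_exp n j) _; apply: leq_pexp2l.
by rewrite sum_nat_const_nat subn0.
Qed.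

Lemma ffact_ge a t : a ^ t <= (a + t) ^_ t.
Proof.
elim: t => [|t IH]; first by rewrite expn0 ffactn0.
rewrite ffactnS addnS /= expnS; apply: leq_mul; [by rewrite -addnS leq_addr | exact: IH].
Qed.

Lemma numeric K r t : 0 < t -> exists n0, forall n, n0 <= n -> K * n ^ t.-1 <= 'C(n - r, t).
Proof.
case: t => // s _ /=.
pose c := r + s.+1; pose A := K * s.+1`! * 2 ^ s.
exists (c + c + A) => n nle.
set a := n - c.
have ha : c + A <= a by rewrite /a; lia.
have e1 : n - r = a + s.+1 by rewrite /a /c; lia.
rewrite -(leq_pmul2r (fact_gt0 s.+1)) bin_ffact e1.
apply: leq_trans (ffact_ge a s.+1); rewrite expnS.
have h1 : A <= a by lia.
have h2 : n <= 2 * a by rewrite /a /c; lia.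
apply: leq_trans (leq_mul h1 (leqnn (a ^ s))).
rewrite /A mulnAC -[X in _ <= X]mulnA -expnMn; apply: leq_mul => //; exact: exp_mono h2.
Qed.


Section Basics.
Variable T : finType.
Implicit Types (A B Y U S X : {set T}) (F G : {set {set T}}).

Lemma in_symd A B x : (x \in symd A B) = (x \in A) (+) (x \in B).
Proof. rewrite /symd !inE; by case: (x \in A); case: (x \in B). Qed.

Lemma in_symd_big m (c : 'I_m -> {set T}) x :
  (x \in \big[@symd T/set0]_(i < m) c i) = odd (\sum_(i < m) (x \in c i)).
Proof.
elim/big_rec2: _ => [|i A s _ IH]; first by rewrite inE.
by rewrite in_symd IH oddD; case: (x \in c i).
Qed.

Lemma in_symd_bigf k (c : {ffun 'I_k -> {set T}}) x :
  (x \in symd_big c) = odd (\sum_(i < k) (x \in c i)).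
Proof. exact: in_symd_big. Qed.

Lemma shatteredP F Y :
  reflect (forall U, U \subset Y -> exists2 S, S \in F & S :&: Y = U) (shattered F Y).
Proof.
apply: (iffP eqP) => [E U sUY | H].
  have : U \in powerset Y by rewrite powersetE.
  by rewrite -E => /imsetP [S SF ->]; exists S.
apply/setP => U; rewrite powersetE; apply/imsetP/idP => [[S _ ->]|sUY].
  exact: subsetIr.
by have [S SF <-] := H U sUY; exists S.
Qed.

Lemma shattered_VC F Y : shattered F Y -> #|Y| <= VC F.
Proof. by move=> sh; rewrite /VC (leq_bigmax_cond _ sh). Qed.

Lemma VC_mono F G : (forall Y, shattered F Y -> shattered G Y) -> VC F <= VC G.
Proof. by move=> H; apply/bigmax_leqP => Y /H; apply: shattered_VC. Qed.

Lemma symdkP F k X :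
  reflect (exists2 c : {ffun 'I_k -> {set T}}, (forall i, c i \in F) & X = symd_big c)
          (X \in symdk F k).
Proof.
apply: (iffP imsetP) => [[c] | [c cF ->]].
  by rewrite inE => /forallP cF ->; exists c.
by exists c => //; rewrite inE; apply/forallP.
Qed.

Lemma card_bigcup_le (I : finType) (P : pred I) (f : I -> {set T}) :
  #|\bigcup_(i | P i) f i| <= \sum_(i | P i) #|f i|.
Proof.
elim/big_rec2: _ => [|i m B _ IH]; first by rewrite cards0.
have [le _] := leq_card_setU (f i) B.
by apply: leq_trans le _; rewrite leq_add2l.
Qed.

Definition downc F := [forall S in F, forall x in S, (S :\ x) \in F].

Lemma downcP F S S' : downc F -> S \in F -> S' \subset S -> S' \in F.
Proof.
move=> /forall_inP dF.
elim: {S}_.+1 {-2}S (ltnSn #|S|) => // m IH S ltS SF sS.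
have [->|neq] := eqVneq S' S; first by [].
have [x xS xS'] : exists2 x, x \in S & x \notin S'.
  apply/exists_inP; move: neq; apply: contraNT; rewrite negb_exists_in.
  move/forall_inP => H; rewrite eqEsubset sS /=; apply/subsetP => y yS.
  by apply: contraR (H y yS) => ->.
apply: (IH (S :\ x)).
- by rewrite (cardsD1 x S) xS in ltS.
- by have /forall_inP := dF S SF; apply.
- by apply/subsetP => y yS'; rewrite !inE (subsetP sS) // andbT; apply: contraNneq xS' => <-.
Qed.

Lemma downc0 F S : downc F -> S \in F -> set0 \in F.
Proof. by move=> dF SF; apply: downcP dF SF (sub0set _). Qed.

Lemma disjPG A B : (forall y, y \in A -> y \in B -> False) -> [disjoint A & B].
Proof.
move=> H; rewrite disjoints_subset; apply/subsetP => y yA; rewrite inE.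
by apply/negP => /(H y yA).
Qed.

Lemma cardsU_disjG A B : [disjoint A & B] -> #|A :|: B| = #|A| + #|B|.
Proof. by move=> dAB; rewrite cardsU (disjoint_setI0 dAB) cards0 subn0. Qed.

End Basics.


Section Comp.
Variable T : finType.
Implicit Types (A B Y U S X : {set T}) (F G : {set {set T}}).

Definition cmp (x : T) F S := if (x \in S) && (S :\ x \notin F) then S :\ x else S.
Definition comp x F := [set cmp x F S | S in F].

Lemma cmp_other x F S y : y != x -> (y \in cmp x F S) = (y \in S).
Proof. by move=> yx; rewrite /cmp; case: ifP => // _; rewrite !inE yx. Qed.

Lemma cmp_x x F S : x \in cmp x F S -> cmp x F S = S /\ S :\ x \in F.
Proof.
rewrite /cmp; case: ifP => [_|]; first by rewrite !inE eqxx.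
by move=> H xS; split=> //; move: H; rewrite xS /= => /negbFE.
Qed.

Lemma cmp_inj x F : {in F &, injective (cmp x F)}.
Proof.
move=> S1 S2 S1F S2F; rewrite /cmp.
case: ifP => [/andP [x1 n1] | h1]; case: ifP => [/andP [x2 n2] | h2] //.
- move=> E; apply/setP => y; have [->|yx] := eqVneq y x; first by rewrite x1 x2.
  by move/setP: E => /(_ y); rewrite !inE yx.
- by move=> E; rewrite E S2F in n1.
- by move=> E; rewrite -E S1F in n2.
Qed.

Lemma card_comp x F : #|comp x F| = #|F|.
Proof. by apply: card_in_imset; apply: cmp_inj. Qed.

Definition wt F := \sum_(S in F) #|S|.

Lemma wt_comp x F S : S \in F -> x \in S -> S :\ x \notin F -> wt (comp x F) < wt F.
Proof.
move=> SF xS nF; rewrite /wt /comp big_imset /=; last by apply: cmp_inj.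
rewrite (bigD1 S) //= (bigD1 S SF) /=.
have -> : cmp x F S = S :\ x by rewrite /cmp xS nF.
rewrite -addSn leq_add //; first by rewrite (cardsD1 x S) xS.
apply: leq_sum => S' _; rewrite /cmp; case: ifP => // /andP [xS' _].
by rewrite (cardsD1 x S') xS' leq_addl.
Qed.

Lemma comp_shatter k x F Y :
  shattered (symdk (comp x F) k) Y -> shattered (symdk F k) Y.
Proof.
move=> /shatteredP sh; apply/shatteredP => U sUY.
pose U' := if x \in Y then U :|: [set x] else U.
have sU'Y : U' \subset Y.
  rewrite /U'; case: ifP => // xY; rewrite subUset sUY /=.
  by rewrite sub1set.
have [X /symdkP [c cF ->] XU] := sh U' sU'Y.
have pre : forall i, exists2 S, S \in F & cmp x F S = c i.
  by move=> i; have /imsetP [S SF ->] := cF i; exists S.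
have /fin_all_exists [u uP] : forall i, exists S, S \in F /\ cmp x F S = c i.
  by move=> i; have [S SF E] := pre i; exists S.
pose a := [ffun i => u i].
have aP i : a i \in F /\ cmp x F (a i) = c i by rewrite ffunE.
have aF i : a i \in F by case: (aP i).
have same y : y != x -> (y \in symd_big a) = (y \in symd_big c).
  move=> yx; rewrite !in_symd_bigf; congr odd; apply: eq_bigr => i _.
  by case: (aP i) => _ <-; rewrite cmp_other.
have [xY | xY] := boolP (x \in Y); last first.
  exists (symd_big a); first by apply/symdkP; exists a.
  have -> : U = U' by rewrite /U' (negbTE xY).
  rewrite -XU; apply/setP => y; rewrite !inE.
  have [->|yx] := eqVneq y x; first by rewrite (negbTE xY) !andbF.
  by rewrite same.
have xX : x \in symd_big c.
  by move/setP: XU => /(_ x); rewrite /U' xY !inE eqxx orbT xY andbT.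
have [j0 xj0] : exists j0, x \in c j0.
  apply/existsP; move: xX; rewrite in_symd_bigf; apply: contraTT => /existsPn H.
  by rewrite big1 // => i _; rewrite (negbTE (H i)).
case: (aP j0) => _ cj0.
have [aj0 aj0F] : cmp x F (a j0) = a j0 /\ a j0 :\ x \in F by apply: cmp_x; rewrite cj0.
have xaj0 : x \in a j0 by rewrite -aj0 cj0.
pose a' := [ffun i => if i == j0 then a j0 :\ x else a i].
have a'F i : a' i \in F by rewrite ffunE; case: eqP => _.
have same' y : y != x -> (y \in symd_big a') = (y \in symd_big a).
  move=> yx; rewrite !in_symd_bigf; congr odd; apply: eq_bigr => i _.
  by rewrite ffunE; case: eqP => // ->; rewrite !inE yx.
have flip : (x \in symd_big a') = ~~ (x \in symd_big a).
  rewrite !in_symd_bigf (bigD1 j0) //= [in RHS](bigD1 j0) //= ffunE eqxx !inE eqxx /=.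
  rewrite xaj0 add1n /= negbK; congr odd; apply: eq_bigr => i ij.
  by rewrite ffunE (negbTE ij).
have [b [bF bsame bx]] : exists b : {ffun 'I_k -> {set T}}, [/\ forall i, b i \in F,
    forall y, y != x -> (y \in symd_big b) = (y \in symd_big c) &
    (x \in symd_big b) = (x \in U)].
  have [E|E] := eqVneq (x \in symd_big a) (x \in U); first by exists a.
  exists a'; split => //; first by move=> y yx; rewrite same' // same.
  by rewrite flip; move: E; case: (x \in U); case: (x \in symd_big a).
exists (symd_big b); first by apply/symdkP; exists b.
apply/setP => y; rewrite inE.
have [->|yx] := eqVneq y x; first by rewrite bx xY andbT.
rewrite bsame //; move/setP: XU => /(_ y); rewrite inE => ->.
by rewrite /U' xY !inE (negbTE yx) orbF.
Qed.


Lemma compress k F : exists D, [/\ downc D, #|D| = #|F| &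
  forall Y, shattered (symdk D k) Y -> shattered (symdk F k) Y].
Proof.
elim: {F}_.+1 {-2}F (ltnSn (wt F)) => // m IH F ltF.
have [dF|ndF] := boolP (downc F); first by exists F.
have [S SF /existsP [x /andP [xS nF]]] : exists2 S, S \in F &
    [exists x, (x \in S) && (S :\ x \notin F)].
  move: ndF; rewrite /downc negb_forall_in => /exists_inP [S SF].
  rewrite negb_forall_in => /exists_inP [x xS nF]; exists S => //.
  by apply/existsP; exists x; rewrite xS.
have [D [dD cD sD]] := IH (comp x F) (leq_trans (wt_comp SF xS nF) ltF).
exists D; split => //; first by rewrite cD card_comp.
by move=> Y /sD; apply: comp_shatter.
Qed.

Lemma downc_shatter k D (c : {ffun 'I_k -> {set T}}) :
  downc D -> (forall i, c i \in D) -> shattered (symdk D k) (\bigcup_i c i).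
Proof.
move=> dD cD; apply/shatteredP => U sU.
pose pk y := [pick i | y \in c i].
pose a := [ffun i => [set y in U | pk y == Some i]].
have aD i : a i \in D.
  apply: downcP dD (cD i) _; apply/subsetP => y; rewrite ffunE inE => /andP [_].
  by rewrite /pk; case: pickP => // j yj /eqP [<-].
exists (symd_big a); first by apply/symdkP; exists a.
apply/setP => y; rewrite inE in_symd_bigf.
have [yU|nyU] := boolP (y \in U); last first.
  rewrite big1 ?andFb // => i _; by rewrite ffunE inE (negbTE nyU).
have yc : y \in \bigcup_i c i by apply: (subsetP sU).
rewrite yc andbT.
have [j pj] : exists j, pk y = Some j.
  move/bigcupP: yc => [j _ yj]; rewrite /pk; case: pickP => [i _|/(_ j)]; first by exists i.
  by rewrite yj.
rewrite (bigD1 j) //= big1 ?addn0.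
  by rewrite ffunE inE yU pj eqxx.
move=> i ij; rewrite ffunE inE pj (_ : (Some j == Some i) = false) ?andbF //.
by apply/eqP => -[E]; rewrite E eqxx in ij.
Qed.

Lemma downc_VC k D (c : {ffun 'I_k -> {set T}}) :
  downc D -> (forall i, c i \in D) -> #|\bigcup_i c i| <= VC (symdk D k).
Proof. by move=> dD cD; apply: shattered_VC; apply: downc_shatter. Qed.

End Comp.


Section Extremal.
Variable T : finType.
Implicit Types (A B Y U S X W Z Q : {set T}) (F G : {set {set T}}).

Lemma in_bigcup_seq (s : seq {set T}) y :
  (y \in \bigcup_(X <- s) X) = has (fun X => y \in X) s.
Proof. by elim: s => [|X s IH]; rewrite ?big_nil ?big_cons ?inE // IH. Qed.

Variables (k d : nat) (D : {set {set T}}).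
Hypothesis hk : 0 < k.
Hypothesis dD : downc D.
Hypothesis HU : forall c : {ffun 'I_k -> {set T}}, (forall i, c i \in D) ->
  #|\bigcup_i c i| <= d.

Lemma HUs (s : seq {set T}) : 0 < size s -> size s <= k -> all (mem D) s ->
  #|\bigcup_(X <- s) X| <= d.
Proof.
case: s => // X0 s _ sk /allP sD.
pose c := [ffun i : 'I_k => nth X0 (X0 :: s) i].
have nthin (i : nat) : nth X0 (X0 :: s) i \in X0 :: s.
  have [lt|ge] := ltnP i (size (X0 :: s)); first by rewrite mem_nth.
  by rewrite nth_default // mem_head.
have -> : \bigcup_(X <- X0 :: s) X = \bigcup_i c i.
  apply/setP => y; rewrite in_bigcup_seq; apply/hasP/bigcupP.
    move=> [X Xs yX]; have ilt : index X (X0 :: s) < k.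
      by apply: leq_trans sk; rewrite index_mem.
    by exists (Ordinal ilt) => //; rewrite ffunE /= nth_index.
  by move=> [i _]; rewrite ffunE => yi; exists (nth X0 (X0 :: s) i).
by apply: HU => i; rewrite ffunE; apply: sD.
Qed.

Definition t := d %/ k.
Definition r := d %% k.
Lemma d_eq : d = t * k + r. Proof. exact: divn_eq. Qed.
Lemma r_lt : r < k. Proof. by rewrite /r ltn_pmod. Qed.
Lemma kt_le : k * t <= d. Proof. by rewrite [X in _ <= X]d_eq mulnC leq_addr. Qed.

Definition M := 2 * d.

Definition strong X := [forall Z : {set T}, (#|Z| <= M) ==>
  [exists W : {set T}, [&& #|W| == t, [disjoint W & Z] & (W :|: X \in D)]]].

Lemma strongP X : strong X -> forall Z, #|Z| <= M ->
  exists W, [/\ #|W| = t, [disjoint W & Z] & W :|: X \in D].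
Proof.
move=> /forallP sX Z ZM; have /implyP /(_ ZM) /existsP [W /and3P [/eqP ? ? ?]] := sX Z.
by exists W.
Qed.

Lemma strong_mem X : strong X -> X \in D.
Proof.
move=> sX; have h0 : #|@set0 T| <= M by rewrite cards0.
have [W [_ _ WX]] := @strongP X sX set0 h0.
by apply: downcP dD WX _; apply: subsetUr.
Qed.

Lemma strong0 X : strong X -> strong set0.
Proof.
move=> /forallP sX; apply/forallP => Z; apply/implyP => ZM.
have /implyP /(_ ZM) /existsP [W /and3P [? ? WX]] := sX Z.
apply/existsP; exists W; rewrite setU0 ?andbT; apply/and3P; split => //.
by apply: downcP dD WX _; apply: subsetUl.
Qed.

Lemma disjP A B : (forall y, y \in A -> y \in B -> False) -> [disjoint A & B].
Proof.
move=> H; rewrite disjoints_subset; apply/subsetP => y yA; rewrite inE.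
by apply/negP => /(H y yA).
Qed.

Lemma cardsU_disj A B : [disjoint A & B] -> #|A :|: B| = #|A| + #|B|.
Proof. by move=> dAB; rewrite cardsU (disjoint_setI0 dAB) cards0 subn0. Qed.

Lemma Wlemma (s : seq {set T}) : all strong s -> forall Z, #|Z| + size s * t <= M ->
  exists ps : seq ({set T} * {set T}), [/\ map snd ps = s,
    all (fun p => p.1 :|: p.2 \in D) ps &
    #|Z :|: \bigcup_(p <- ps) p.1| = #|Z| + size s * t].
Proof.
elim: s => [|X s IH] /=.
  by move=> _ Z _; exists [::]; rewrite big_nil setU0 addn0.
move=> /andP [sX ss] Z ZM.
have ZM' : #|Z| + size s * t <= M by move: ZM; rewrite mulSn; lia.
have [ps [mps aps cps]] := IH ss Z ZM'.
set Z' := Z :|: _ in cps.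
have Z'M : #|Z'| <= M by rewrite cps.
have [W [cW dW WX]] := strongP sX Z'M.
exists ((W, X) :: ps); split => /=; first by rewrite mps.
  by rewrite WX aps.
rewrite big_cons /= setUCA -/Z' setUC cardsU_disj; last by rewrite disjoint_sym.
by rewrite cps cW mulSn; lia.
Qed.


Lemma Ulemma (ms s : seq {set T}) : all (mem D) ms -> all strong s ->
  0 < size ms + size s -> size ms + size s <= k ->
  #|\bigcup_(X <- ms) X :|: \bigcup_(X <- s) X| + size s * t <= d.
Proof.
move=> msD ss pos sk.
set Z := _ :|: _.
have ZD : #|Z| <= d.
  rewrite /Z -big_cat; apply: HUs; rewrite ?size_cat //.
  rewrite all_cat msD /=; apply/allP => X Xs; apply: strong_mem.
  exact: (allP ss).
have ZM : #|Z| + size s * t <= M.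
  have : size s * t <= k * t by apply: leq_mul => //; apply: leq_trans sk; apply: leq_addl.
  have := kt_le; rewrite /M; lia.
have [ps [mps aps cps]] := Wlemma ss ZM.
rewrite -cps.
pose L := ms ++ [seq p.1 :|: p.2 | p <- ps].
have sps : size ps = size s by rewrite -mps size_map.
have -> : Z :|: \bigcup_(p <- ps) p.1 = \bigcup_(X <- L) X.
  rewrite /L big_cat big_map /= big_split /= /Z -mps big_map.
  by rewrite -!setUA; congr (_ :|: _); rewrite setUC.
apply: HUs; rewrite ?size_cat ?size_map ?sps //.
rewrite all_cat msD /=; apply/allP => X /mapP [p pps ->]; exact: (allP aps).
Qed.

Definition Hs := \bigcup_(X | strong X) X.

Lemma Hs_strong X : strong X -> X \subset Hs.
Proof. by move=> sX; apply: bigcup_sup. Qed.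

Definition pickst (y : T) := odflt set0 [pick X | strong X && (y \in X)].

Lemma pickstP y : y \in Hs -> strong (pickst y) /\ y \in pickst y.
Proof.
move=> /bigcupP [X sX yX]; rewrite /pickst; case: pickP => [Y /andP [? ?] //|].
by move/(_ X); rewrite sX yX.
Qed.

Lemma cover_Hs (P : {set T}) : P \subset Hs -> exists s : seq {set T},
  [/\ all strong s, size s = #|P| & P \subset \bigcup_(X <- s) X].
Proof.
move=> PH; exists [seq pickst y | y <- enum P]; split.
- by apply/allP => X /mapP [y]; rewrite mem_enum => yP ->; case: (pickstP (subsetP PH y yP)).
- by rewrite size_map cardE.
- apply/subsetP => y yP; rewrite in_bigcup_seq; apply/hasP; exists (pickst y).
    by apply: map_f; rewrite mem_enum.
  by case: (pickstP (subsetP PH y yP)).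
Qed.

Lemma pad_strong (s : seq {set T}) m : strong set0 -> all strong s ->
  all strong (s ++ nseq m set0) /\
  \bigcup_(X <- s ++ nseq m set0) X = \bigcup_(X <- s) X.
Proof.
move=> s0 ss; split; first by rewrite all_cat ss /= all_nseq s0 orbT.
rewrite big_cat /=; elim: m => [|m IH]; first by rewrite big_nil setU0.
by rewrite /= big_cons set0U.
Qed.

Lemma card_Hs : strong set0 -> #|Hs| <= r.
Proof.
move=> s0; rewrite leqNgt; apply/negP => lt.
pose P := [set y in take r.+1 (enum Hs)].
have PH : P \subset Hs.
  by apply/subsetP => y; rewrite inE => /mem_take; rewrite mem_enum.
have cP : #|P| = r.+1.
  have u : uniq (take r.+1 (enum Hs)) by apply: take_uniq; apply: enum_uniq.
  by rewrite /P cardsE (card_uniqP u) size_takel // -cardE.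
have [s [ss ssz sP]] := cover_Hs PH.
have [ss' Es'] := pad_strong (k - size s) s0 ss.
have := @Ulemma [::] (s ++ nseq (k - size s) set0) isT ss'.
rewrite size_cat size_nseq big_nil set0U Es' /= ssz cP.
have := r_lt; have := d_eq.
have := subset_leq_card sP; rewrite cP.
move=> h1 h2 h3 h4; have h5 : r.+1 + (k - r.+1) = k by lia.
rewrite h5 add0n in h4; have := h4 hk (leqnn k).
rewrite mulnC; lia.
Qed.

Lemma mem_bound S : strong set0 -> S \in D -> #|S :\: Hs| + #|Hs| + (k - 1) * t <= d.
Proof.
move=> s0 SD.
have [s [ss ssz sP]] := cover_Hs (subxx Hs).
have hr := card_Hs s0; have := r_lt => hrk.
have [ss' Es'] := pad_strong (k - 1 - size s) s0 ss.
have := @Ulemma [:: S] (s ++ nseq (k - 1 - size s) set0) _ ss'.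
rewrite /= size_cat size_nseq big_cons big_nil setU0 Es' ssz.
have e : 1 + (#|Hs| + (k - 1 - #|Hs|)) = k by lia.
rewrite e SD => /(_ isT hk (leqnn _)).
have e2 : #|Hs| + (k - 1 - #|Hs|) = k - 1 by lia.
rewrite e2; apply: leq_trans; rewrite leq_add2r.
have -> : #|S :\: Hs| + #|Hs| = #|S :|: Hs|.
  rewrite -cardsU_disj; last by apply: disjP => y; rewrite inE => /andP [/negP].
  have -> // : S :\: Hs :|: Hs = S :|: Hs.
  by apply/setP => y; rewrite !inE; case: (y \in S); case: (y \in Hs).
by apply: subset_leq_card; apply: setUS.
Qed.


Lemma cover_lemma (G : {set {set T}}) s m :
  (forall ws : seq {set T}, all (fun W => W \in G) ws -> pairwise (fun A B => [disjoint A & B]) ws ->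
    size ws = m -> False) ->
  (forall W, W \in G -> #|W| = s) ->
  exists C : {set T}, #|C| <= m.-1 * s /\ forall W, W \in G -> ~~ [disjoint W & C].
Proof.
elim: m G => [|m IH] G H Gs; first by case: (H [::]).
have [G0|[W0 W0G]] := set_0Vmem G.
  by exists set0; split; rewrite ?cards0 // G0 => W; rewrite inE.
case: m IH H => [|m] IH H.
  by case: (H [:: W0]); rewrite /= ?W0G.
pose G' := [set W in G | [disjoint W & W0]].
have H' : forall ws : seq {set T}, all (fun W => W \in G') ws ->
    pairwise (fun A B => [disjoint A & B]) ws -> size ws = m.+1 -> False.
  move=> ws /allP wsG pw sz; apply: (H (W0 :: ws)); last by rewrite /= sz.
    rewrite /= W0G /=; apply/allP => W /wsG; rewrite inE => /andP [WG _]; exact: WG.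
  rewrite /=; apply/andP; split => //.
  apply/allP => W /wsG; rewrite inE disjoint_sym => /andP [_ WW]; exact: WW.
have G's : forall W, W \in G' -> #|W| = s.
  by move=> W; rewrite inE => /andP [WG _]; apply: Gs.
have [C' [cC' hC']] := IH G' H' G's.
exists (W0 :|: C'); split.
  have [le _] := leq_card_setU W0 C'; apply: leq_trans le _.
  by rewrite (Gs _ W0G) /= mulSn leq_add2l.
move=> W WG; have [dW|ndW] := boolP [disjoint W & W0]; last first.
  apply: contra ndW => dis; apply: disjointWr dis; apply: subsetUl.
have : W \in G' by rewrite inE WG.
move/hC' => ndC; apply: contra ndC => dis; apply: disjointWr dis; apply: subsetUr.
Qed.

Lemma card_pw (ws : seq {set T}) s : pairwise (fun A B => [disjoint A & B]) ws ->
  all (fun W => #|W| == s) ws -> #|\bigcup_(w <- ws) w| = size ws * s.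
Proof.
elim: ws => [|w ws IH] /=; first by rewrite big_nil cards0.
move=> /andP [dw pw] /andP [/eqP ws_ cs]; rewrite big_cons cardsU_disj ?IH // ?ws_ ?mulSn //.
apply: disjP => y yw; rewrite in_bigcup_seq => /hasP [W Ww yW].
by have := (allP dw) W Ww => /disjointFr /(_ yw); rewrite yW.
Qed.

Definition Fam Z Q s := [set W : {set T} | [&& [disjoint W & Q], W :|: Z \in D & #|W| == s]].

Lemma Fam_cover Z Q s : t < s ->
  exists C : {set T}, #|C| <= (k - 1) * s /\ forall W, W \in Fam Z Q s -> ~~ [disjoint W & C].
Proof.
move=> ts; have := @cover_lemma (Fam Z Q s) s k.
rewrite -subn1; apply.
  move=> ws /allP wsF pw sz.
  have cs : all (fun W => #|W| == s) ws.
    by apply/allP => W /wsF; rewrite inE => /and3P [].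
  have := card_pw pw cs; rewrite sz => cu.
  pose L := [seq w :|: Z | w <- ws].
  have := @HUs L; rewrite size_map sz => /(_ hk (leqnn _)).
  have LD : all (mem D) L.
    by apply/allP => X /mapP [w /wsF]; rewrite inE => /and3P [_ ? _] ->.
  move=> /(_ LD) cL.
  have : #|\bigcup_(w <- ws) w| <= #|\bigcup_(X <- L) X|.
    apply: subset_leq_card; apply/subsetP => y; rewrite !in_bigcup_seq.
    move=> /hasP [w ww yw]; apply/hasP; exists (w :|: Z); first by apply: map_f.
    by rewrite inE yw.
  rewrite cu => h; have := leq_trans h cL; rewrite d_eq.
  have : k * t.+1 <= k * s by rewrite leq_mul2l ts orbT.
  have := r_lt; rewrite mulnS; lia.
by move=> W; rewrite inE => /and3P [_ _ /eqP].
Qed.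

Lemma ndisjP A B : ~~ [disjoint A & B] -> exists2 y, y \in A & y \in B.
Proof.
move=> nd; case: (boolP [exists y, (y \in A) && (y \in B)]) => [/existsP [y /andP [? ?]]|/existsPn H].
  by exists y.
by case/negP: nd; apply: disjP => y yA yB; case/negP: (H y); rewrite yA.
Qed.

Definition u := 'C(#|T|, t.-1).

Lemma card_contains z s' : #|[set W : {set T} | (z \in W) && (#|W| == s')]| <= 'C(#|T|, s'.-1).
Proof.
rewrite -card_draws.
have inj : {in [set W : {set T} | (z \in W) && (#|W| == s')] &, injective (fun W => W :\ z)}.
  move=> W1 W2; rewrite !inE => /andP [z1 _] /andP [z2 _] E; apply/setP => y.
  have [->|yz] := eqVneq y z; first by rewrite z1 z2.
  by move/setP: E => /(_ y); rewrite !inE yz.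
rewrite -(card_in_imset inj); apply: subset_leq_card; apply/subsetP => V /imsetP [W].
rewrite !inE => /andP [zW /eqP cW] ->; by rewrite (cardsD1 z W) zW add1n in cW; rewrite -cW.
Qed.

Lemma sum_le_const (A : {set T}) (g : T -> nat) (b : nat) : (forall c, c \in A -> g c <= b) ->
  \sum_(c in A) g c <= #|A| * b.
Proof. by move=> H; rewrite -sum_nat_const; apply: leq_sum. Qed.

Lemma Fam_step Z Q s (B : nat) : t < s ->
  (forall c, c \notin Q -> #|Fam (c |: Z) (c |: Q) s.-1| <= B) ->
  #|Fam Z Q s| <= (k - 1) * s * B.
Proof.
move=> ts HB; have [C [cC hC]] := Fam_cover Z Q ts.
have sub : Fam Z Q s \subset \bigcup_(c in C) [set W in Fam Z Q s | c \in W].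
  apply/subsetP => W WF; have [c cW cC'] := ndisjP (hC W WF).
  by apply/bigcupP; exists c => //; rewrite inE WF cW.
apply: leq_trans (subset_leq_card sub) _; apply: leq_trans (card_bigcup_le _ _) _.
apply: leq_trans (sum_le_const (b := B) _) _; last by rewrite leq_mul2r cC orbT.
move=> c _; have [cQ|cQ] := boolP (c \in Q).
  rewrite (_ : [set W in Fam Z Q s | c \in W] = set0) ?cards0 //.
  apply/setP => W; rewrite !inE; apply/negP => /andP [/and3P [dWQ _ _] cW].
  by rewrite (disjointFr dWQ cW) in cQ.
apply: leq_trans (HB c cQ).
have inj : {in [set W in Fam Z Q s | c \in W] &, injective (fun W => W :\ c)}.
  move=> W1 W2; rewrite !inE => /andP [_ z1] /andP [_ z2] E; apply/setP => y.
  have [->|yz] := eqVneq y c; first by rewrite z1 z2.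
  by move/setP: E => /(_ y); rewrite !inE yz.
rewrite -(card_in_imset inj); apply: subset_leq_card; apply/subsetP => V /imsetP [W].
rewrite !inE => /andP [/and3P [dWQ WZ /eqP cW] cWm] ->; apply/and3P; split.
- apply: disjP => y; rewrite !inE => /andP [yc yW] /orP [/eqP yc'|yQ].
    by rewrite yc' eqxx in yc.
  by rewrite (disjointFr dWQ yW) in yQ.
- rewrite (_ : W :\ c :|: (c |: Z) = W :|: Z) //.
  apply/setP => y; rewrite !inE; have [->|] := eqVneq y c; first by rewrite cWm.
  by [].
- by rewrite (cardsD1 c W) cWm add1n in cW; rewrite -cW.
Qed.

Fixpoint Kb j := if j is j'.+1 then (k - 1) * (t + j) * Kb j' else M.

Lemma Lbound j : forall Z Q, (forall Y, Z \subset Y -> ~~ strong Y) ->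
  #|Fam Z Q (t + j)| <= Kb j * u.
Proof.
elim: j => [|j IH] Z Q nZ.
  have := nZ Z (subxx Z); rewrite negb_forall => /existsP [Z'].
  rewrite negb_imply negb_exists => /andP [Z'M /forallP nW].
  have sub : Fam Z Q (t + 0) \subset
      \bigcup_(z in Z') [set W : {set T} | (z \in W) && (#|W| == t)].
    apply/subsetP => W; rewrite inE addn0 => /and3P [_ WZ cW].
    have : ~~ [disjoint W & Z'] by move: (nW W); rewrite cW WZ andbT.
    move=> /ndisjP [z zW zZ']; apply/bigcupP; exists z => //; by rewrite inE zW.
  apply: leq_trans (subset_leq_card sub) _; apply: leq_trans (card_bigcup_le _ _) _.
  apply: leq_trans (sum_le_const (b := u) _) _; last by rewrite /= leq_mul2r Z'M orbT.
  by move=> z _; apply: card_contains.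
have h1 : t < (t + j).+1 by rewrite ltnS leq_addr.
have h2 : forall c, c \notin Q -> #|Fam (c |: Z) (c |: Q) (t + j).+1.-1| <= Kb j * u.
  move=> c _; apply: IH => Y sY; apply: nZ; apply: subset_trans sY; apply: subsetUr.
rewrite addnS; apply: leq_trans (Fam_step h1 h2) _.
by rewrite /= addnS !mulnA.
Qed.

Definition KB := \sum_(j < d) Kb j.+1.

Lemma mem_le_d S : S \in D -> #|S| <= d.
Proof.
move=> SD; have := @HUs [:: S] isT hk; rewrite /= SD big_cons big_nil setU0.
by apply.
Qed.

Lemma Fam_Hs J j : #|Fam J Hs (t + j.+1)| <= Kb j.+1 * u.
Proof.
have h1 : t < t + j.+1 by rewrite -addSnnS leq_addr.
have h2 : forall c, c \notin Hs -> #|Fam (c |: J) (c |: Hs) (t + j.+1).-1| <= Kb j * u.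
  move=> c cH; rewrite addnS /=; apply: Lbound => Y sY; apply/negP => sy.
  have := subset_trans sY (Hs_strong sy); rewrite subUset sub1set => /andP [cH' _].
  by rewrite cH' in cH.
apply: leq_trans (Fam_step h1 h2) _.
by rewrite /= addnS !mulnA.
Qed.

Lemma split_inj : injective (fun S : {set T} => (S :&: Hs, S :\: Hs)).
Proof.
move=> S1 S2 [E1 E2]; apply/setP => y.
have [yH|yH] := boolP (y \in Hs).
  by move/setP: E1 => /(_ y); rewrite !inE yH !andbT.
by move/setP: E2 => /(_ y); rewrite !inE yH.
Qed.

Lemma bad_bound : #|[set S in D | t < #|S :\: Hs|]| <= 2 ^ #|Hs| * (KB * u).
Proof.
set bad := [set S in D | _].
rewrite -(card_in_imset (f := fun S : {set T} => (S :&: Hs, S :\: Hs))); last first.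
  by move=> ? ? _ _; apply: split_inj.
have sub : [set (S :&: Hs, S :\: Hs) | S in bad] \subset
    \bigcup_(J in powerset Hs) \bigcup_(j < d)
      [set (J, W) | W in Fam J Hs (t + j.+1)].
  apply/subsetP => p /imsetP [S]; rewrite inE => /andP [SD ts] ->.
  apply/bigcupP; exists (S :&: Hs); first by rewrite powersetE subsetIr.
  have sd : #|S :\: Hs| <= d.
    by apply: leq_trans (mem_le_d SD); apply: subset_leq_card; apply: subsetDl.
  have jlt : #|S :\: Hs| - t - 1 < d by lia.
  apply/bigcupP; exists (Ordinal jlt) => //=; apply/imsetP; exists (S :\: Hs) => //.
  rewrite inE; apply/and3P; split.
  - by apply: disjP => y; rewrite inE => /andP [/negP].
  - rewrite (_ : S :\: Hs :|: S :&: Hs = S) //.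
    by apply/setP => y; rewrite !inE; case: (y \in S); case: (y \in Hs).
  - apply/eqP; lia.
apply: leq_trans (subset_leq_card sub) _; apply: leq_trans (card_bigcup_le _ _) _.
rewrite -card_powerset -sum_nat_const; apply: leq_sum => J _.
apply: leq_trans (card_bigcup_le _ _) _.
rewrite /KB big_distrl /=; apply: leq_sum => j _.
apply: leq_trans (leq_imset_card _ _) _; exact: Fam_Hs.
Qed.

Lemma card_small (B : {set T}) t' :
  #|[set W : {set T} | (W \subset B) && (#|W| <= t')]| = binom_le #|B| t'.
Proof.
elim: t' => [|t' IH].
  rewrite binom_le0 -(bin0 #|B|) -cards_draws; apply: eq_card => W.
  by rewrite !inE leqn0.
rewrite binom_leS -IH -cards_draws -cardsU_disjG.
  apply: eq_card => W; rewrite !inE leq_eqVlt ltnS orbC.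
  by case: (W \subset B).
apply: disjPG => W; rewrite !inE => /andP [_ le] /andP [_ /eqP e].
by rewrite e ltnn in le.
Qed.

Lemma good_bound : #|[set S in D | #|S :\: Hs| <= t]| <= 2 ^ #|Hs| * binom_le (#|T| - #|Hs|) t.
Proof.
rewrite -(card_in_imset (f := fun S : {set T} => (S :&: Hs, S :\: Hs))); last first.
  by move=> ? ? _ _; apply: split_inj.
have sub : [set (S :&: Hs, S :\: Hs) | S in [set S in D | #|S :\: Hs| <= t]] \subset
   setX (powerset Hs) [set W : {set T} | (W \subset ~: Hs) && (#|W| <= t)].
  apply/subsetP => p /imsetP [S]; rewrite inE => /andP [SD ts] ->.
  rewrite inE /= powersetE subsetIr /= inE ts andbT.
  by apply/subsetP => y; rewrite !inE => /andP [].
apply: leq_trans (subset_leq_card sub) _.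
by rewrite cardsX card_powerset card_small -[#|T|](cardsC Hs) addKn.
Qed.

Lemma card_D_split : #|D| <= #|[set S in D | #|S :\: Hs| <= t]| + #|[set S in D | t < #|S :\: Hs|]|.
Proof.
have [le _] := leq_card_setU [set S in D | #|S :\: Hs| <= t] [set S in D | t < #|S :\: Hs|].
apply: leq_trans le; apply: subset_leq_card; apply/subsetP => S SD.
by rewrite !inE SD /=; case: leqP.
Qed.

Lemma strong_t0 S : t = 0 -> S \in D -> strong S.
Proof.
move=> t0 SD; apply/forallP => Z; apply/implyP => _; apply/existsP; exists set0.
by rewrite cards0 t0 eqxx set0U SD /= andbT; apply: disjPG => y; rewrite inE.
Qed.

Lemma bin_le_binom_le m : 'C(m, t) <= binom_le m t.
Proof.
case: t => [|t']; first by rewrite binom_le0 bin0.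
by rewrite binom_leS leq_addl.
Qed.

Lemma extremal : 0 < #|T| ->
  (0 < t -> (t + M + r * t + KB) * #|T| ^ t.-1 <= 'C(#|T| - r, t)) ->
  #|D| <= 2 ^ r * binom_le (#|T| - r) t.
Proof.
move=> n0 Hnum.
set n := #|T| in n0 Hnum *.
have [D0|[S0 S0D]] := set_0Vmem D; first by rewrite D0 cards0.
have e0 : set0 \in D := downc0 dD S0D.
set X := binom_le (n - r) t.
have hu : u <= n ^ t.-1 by apply: bin_le_exp.
have CX : 'C(n - r, t) <= X by apply: bin_le_binom_le.
have hX : 0 < X by rewrite /X /binom_le big_nat_recl // bin0 add1n.
have := card_D_split.
have [s0|ns0] := boolP (strong set0).
  have hH := card_Hs s0.
  have [hr|hr] := eqVneq #|Hs| r.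
    have -> : [set S in D | t < #|S :\: Hs|] = set0.
      apply/setP => S; rewrite !inE; apply/negP => /andP [SD lt].
      have := mem_bound s0 SD; rewrite hr.
      have ek : t * k = (k - 1) * t + t by rewrite mulnC -{1}(subnK hk) mulnDl mul1n.
      have := d_eq; lia.
    rewrite cards0 addn0 => h; apply: leq_trans h _; apply: leq_trans good_bound _.
    by rewrite hr.
  have hlt : #|Hs| < r by rewrite ltn_neqAle hr hH.
  have [t0|tpos] := posnP t.
    have -> : [set S in D | t < #|S :\: Hs|] = set0.
      apply/setP => S; rewrite !inE; apply/negP => /andP [SD lt].
      have := Hs_strong (strong_t0 t0 SD) => sH.
      have : S :\: Hs = set0.
        apply/setP => y; rewrite !inE; case yS: (y \in S); last by rewrite andbF.
        by rewrite (subsetP sH y yS).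
      by move=> e; rewrite e cards0 t0 in lt.
    rewrite cards0 addn0 => h; apply: leq_trans h _; apply: leq_trans good_bound _.
    rewrite /X t0 !binom_le0 !muln1; apply: leq_pexp2l => //; exact: ltnW.
  have Hn := Hnum tpos.
  have nr : r + t <= n.
    rewrite leqNgt; apply/negP => lt.
    have : 'C(n - r, t) = 0 by rewrite bin_small //; lia.
    move=> e; rewrite e in Hn.
    have : 0 < (t + M + r * t + KB) * n ^ t.-1 by rewrite muln_gt0 expn_gt0 n0 /=; lia.
    lia.
  have gb := good_bound; have bb := bad_bound.
  have [t' et] : exists t', t = t'.+1 by exists t.-1; rewrite prednK.
  rewrite /X et -/n in CX hX gb bb Hn *.
  rewrite et /= in hu.
  have sh := binom_le_shift (n - r) (r - #|Hs|) t'.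
  have e1 : n - r + (r - #|Hs|) = n - #|Hs| by lia.
  rewrite e1 in sh.
  have b1 : binom_le (n - #|Hs|) t' <= t'.+1 * n ^ t' :=
    leq_trans (binom_le_mono t' (leq_subr _ _)) (binom_le_pred_bound t' n0).
  set N := n ^ t' in Hn b1 hu.
  have p2 : 2 ^ #|Hs| * 2 <= 2 ^ r by rewrite -expnSr leq_pexp2l.
  move=> h; apply: leq_trans h _; apply: leq_trans (leq_add gb bb) _.
  rewrite -mulnDr; apply: leq_trans (leq_mul (leqnn (2 ^ #|Hs|)) (_ : _ <= X * 2)) _.
    have : (r - #|Hs|) * binom_le (n - #|Hs|) t' <= r * (t'.+1 * N).
      by apply: leq_mul; [apply: leq_subr | exact: b1].
    have : KB * u <= KB * N by rewrite leq_mul2l hu orbT.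
    move: Hn; rewrite !mulnDl => Hn.
    have : r * (t'.+1 * N) = r * t'.+1 * N by rewrite mulnA.
    move=> h1 h2 h3; rewrite /X et; lia.
  by rewrite /X et [_ * 2]mulnC mulnA leq_mul2r p2 orbT.
have nostrong : forall Y, ~~ strong Y by move=> Y; apply: contra ns0; apply: strong0.
have H0 : Hs = set0.
  apply/setP => y; rewrite inE; apply/bigcupP => -[Y sY _].
  by rewrite (negbTE (nostrong Y)) in sY.
have tpos : 0 < t.
  rewrite lt0n; apply/negP => /eqP t0; by rewrite (strong_t0 t0 e0) in ns0.
have Hn := Hnum tpos.
have gb : #|[set S in D | #|S :\: Hs| <= t]| <= binom_le n t.-1 + M * u.
  have sub : [set S in D | #|S :\: Hs| <= t] \subset
     [set W : {set T} | (W \subset setT) && (#|W| <= t.-1)] :|: Fam set0 set0 (t + 0).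
    apply/subsetP => S; rewrite !inE H0 setD0 => /andP [SD St].
    rewrite subsetT /= setU0 SD addn0 /=.
    case: (ltnP #|S| t) => [lt|ge]; first by rewrite -ltnS prednK // lt.
    apply/orP; right; apply/andP; split; first by apply: disjPG => y; rewrite inE.
    by rewrite eqn_leq St ge.
  apply: leq_trans (subset_leq_card sub) _.
  have [le _] := leq_card_setU [set W : {set T} | (W \subset setT) && (#|W| <= t.-1)]
    (Fam set0 set0 (t + 0)).
  apply: leq_trans le _; rewrite card_small cardsT; apply: leq_add => //.
  by apply: Lbound => Y _; apply: nostrong.
have hs0 : #|Hs| = 0 by rewrite H0 cards0.
have bb := bad_bound; rewrite hs0 expn0 mul1n in bb.
have b1 : binom_le n t.-1 <= t * n ^ t.-1.
  by have := binom_le_pred_bound t.-1 n0; rewrite prednK.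
move=> h; apply: leq_trans h _; apply: leq_trans (leq_add gb bb) _.
apply: leq_trans (_ : _ <= X) _; last by rewrite leq_pmull // expn_gt0.
apply: leq_trans CX; apply: leq_trans Hn.
have : M * u <= M * n ^ t.-1 by rewrite leq_mul2l hu orbT.
have : KB * u <= KB * n ^ t.-1 by rewrite leq_mul2l hu orbT.
rewrite !mulnDl; lia.
Qed.

End Extremal.

Theorem theorem3 (k d : nat) (hk : 0 < k) (hd : 0 < d) :
  forall r : nat, r <= k - 1 -> d = r %[mod k] ->
  exists n0 : nat, forall n : nat, n0 <= n ->
    forall A : {set {set 'I_n}},
      VC (symdk A k) <= d ->
      #|A| <= 2 ^ r * binom_le (n - r) (d %/ k).
Proof.
move=> r0 hr0 hmod.
have er : r0 = r k d by rewrite /r hmod modn_small //; lia.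
have [n1 Hn1] : exists n1, forall n, n1 <= n -> 0 < t k d ->
    (t k d + M d + r k d * t k d + KB k d) * n ^ (t k d).-1 <= 'C(n - r k d, t k d).
  have [tpos|t0] := posnP (t k d); last first.
    have [n1 H] := numeric (t k d + M d + r k d * t k d + KB k d) (r k d) t0.
    by exists n1 => n /H.
  by exists 0 => n _; rewrite tpos.
exists (maxn 1 n1) => n nle A VCA.
have n0 : 0 < n by move: nle; rewrite geq_max => /andP [].
have nn1 : n1 <= n by move: nle; rewrite geq_max => /andP [].
have [D [dD cD sD]] := compress k A.
rewrite -cD er.
have HU : forall c : {ffun 'I_k -> {set 'I_n}}, (forall i, c i \in D) -> #|\bigcup_i c i| <= d.
  move=> c cD'; apply: leq_trans (downc_VC dD cD') _; apply: leq_trans VCA.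
  by apply: VC_mono.
have := extremal hk dD HU; rewrite card_ord; apply => //.
by move=> tp; apply: Hn1.
Qed.
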